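(* Let $R>0$ and $p>0$. Let $\mathcal G$ be a hypergraph, $U$ a set, $\pi:V(\mathcal G)\to U$ a function with $|\pi(E)|=|E|$ for every $E\in\mathcal G$, and $\vartheta:\pi(\mathcal G)\to\mathbb R_{\ge0}$. If $\Lambda_p(\vartheta)<e(\vartheta)^2/R$, then $\Lambda_p(\vartheta\mathbin{\hat\circ}\pi)<e(\vartheta\mathbin{\hat\circ}\pi)^2/R$.
   Context: A hypergraph is identified with its edge set; $\pi(\mathcal G)=\{\pi(E):E\in\mathcal G\}$ with vertex set $\pi(V(\mathcal G))$. For $\nu:\mathcal G\to\mathbb R_{\ge0}$: $e(\nu)=\sum_E\nu(E)$, $d_\nu(L)=\sum_{E\in\mathcal G,L\subset E}\nu(E)$, $\Lambda_p(\nu)=\sum_{L\subset V(\mathcal G),|L|\ge2}d_\nu(L)^2p^{-|L|}$. The pullback $\vartheta\mathbin{\hat\circ}\pi:\mathcal G\to\mathbb R_{\ge0}$ is $\vartheta\mathbin{\hat\circ}\pi(E)=\vartheta(\pi(E))/|\{E_0\in\mathcal G:\pi(E_0)=\pi(E)\}|$. *)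

(* Defs.v *)
From mathcomp Require Import all_boot all_order all_algebra.
Set Implicit Arguments. Unset Strict Implicit. Unset Printing Implicit Defensive.
Import Order.TTheory GRing.Theory Num.Theory.
Local Open Scope ring_scope.

(* A finite hypergraph on a finite vertex type T is given by its vertex set
   VH : {set T} and its edge set H : {set {set T}} (edges are subsets of VH).
   A weight nu : H -> R>=0 is represented by a function {set T} -> R whose
   values outside H are irrelevant. *)
Section Hyper.
Variables (R : realFieldType) (T : finType).

Definition hg_e (H : {set {set T}}) (nu : {set T} -> R) : R :=
  \sum_(E in H) nu E.

Definition hg_deg (H : {set {set T}}) (nu : {set T} -> R) (L : {set T}) : R :=
  \sum_(E in H | L \subset E) nu E.

Definition hg_Lambda (VH : {set T}) (H : {set {set T}}) (p : R)
    (nu : {set T} -> R) : R :=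
  \sum_(L in powerset VH | (1 < #|L|)%N) (hg_deg H nu L) ^+ 2 * p ^- #|L|.
End Hyper.

Definition hg_image (T U : finType) (pi : T -> U) (G : {set {set T}})
  : {set {set U}} := [set pi @: E | E : {set T} in G].

Definition hg_pullback (R : realFieldType) (T U : finType) (pi : T -> U)
    (G : {set {set T}}) (theta : {set U} -> R) (E : {set T}) : R :=
  theta (pi @: E) / (#|[set E0 in G | pi @: E0 == pi @: E]|)%:R.

(* Main.v *)
Require Import Defs.
From mathcomp Require Import all_boot all_order all_algebra.
Import Order.TTheory GRing.Theory Num.Theory.
Local Open Scope ring_scope.

Lemma sumsq_le (R : realFieldType) (I : finType) (P : pred I) (a : I -> R) :
  (forall i, P i -> 0 <= a i) ->
  \sum_(i | P i) a i ^+ 2 <= (\sum_(i | P i) a i) ^+ 2.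
Proof.
move=> a0; rewrite [X in _ <= X]expr2 big_distrl /=.
apply: ler_sum => i Pi; rewrite expr2; apply: ler_wpM2l; first exact: a0.
rewrite (bigD1 i) //= lerDl; apply: sumr_ge0 => j /andP[Pj _]; exact: a0.
Qed.

Lemma sub_inj (T U : finType) (pi : T -> U) (E L1 L2 : {set T}) :
  {in E &, injective pi} -> L1 \subset E -> L2 \subset E ->
  pi @: L1 = pi @: L2 -> L1 = L2.
Proof.
move=> inj.
have H : forall A B : {set T}, A \subset E -> B \subset E -> pi @: A = pi @: B -> A \subset B.
  move=> A B AE BE eAB; apply/subsetP => x xA.
  have : pi x \in pi @: B by rewrite -eAB imset_f.
  case/imsetP => y yB exy.
  by rewrite (inj x y (subsetP AE x xA) (subsetP BE y yB) exy).
move=> h1 h2 e; apply/eqP; rewrite eqEsubset; apply/andP; split; first exact: H.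
exact: H.
Qed.

Theorem lemma7p4 (R : realFieldType) (Rc p : R) (T U : finType)
    (VG : {set T}) (G : {set {set T}}) (pi : T -> U) (theta : {set U} -> R) :
  0 < Rc -> 0 < p ->
  (forall E, E \in G -> E \subset VG) ->
  (forall E, E \in G -> #|pi @: E| = #|E|) ->
  (forall F, F \in hg_image pi G -> 0 <= theta F) ->
  hg_Lambda (pi @: VG) (hg_image pi G) p theta
    < (hg_e (hg_image pi G) theta) ^+ 2 / Rc ->
  hg_Lambda VG G p (hg_pullback pi G theta)
    < (hg_e G (hg_pullback pi G theta)) ^+ 2 / Rc.
Proof.
move=> Rc0 p0 GV Gcard th0 Hlam.
set nu := hg_pullback pi G theta.
have inj : forall E, E \in G -> {in E &, injective pi}.
  by move=> E EG; apply/imset_injP; rewrite Gcard.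
have nu0 : forall E, E \in G -> 0 <= nu E.
  move=> E EG; rewrite /nu /hg_pullback divr_ge0 ?ler0n //.
  by apply: th0; rewrite /hg_image imset_f.
have pull : forall Q : pred {set U},
    \sum_(E in G | Q (pi @: E)) nu E = \sum_(F in hg_image pi G | Q F) theta F.
  move=> Q.
  rewrite (@partition_big _ _ _ _ _ _ (fun E => (E \in G) && Q (pi @: E)) (fun E => pi @: E) (fun F => (F \in hg_image pi G) && Q F)) /=; last first.
    by move=> E /andP[EG QE]; rewrite QE andbT /hg_image imset_f.
  apply: eq_bigr => F /andP[FI QF].
  rewrite (eq_bigl (fun E => E \in [set E0 in G | pi @: E0 == F])); last first.
    move=> E; rewrite inE; case e: (pi @: E == F); last by rewrite !andbF.
    by rewrite (eqP e) QF andbT.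
  rewrite (eq_bigr (fun _ => theta F / (#|[set E0 in G | pi @: E0 == F]|)%:R)); last first.
    by move=> E; rewrite inE => /andP[_ /eqP e]; rewrite /nu /hg_pullback e.
  rewrite sumr_const -(mulr_natr (theta F / _)) divfK // pnatr_eq0 -lt0n.
  case/imsetP: FI => E0 E0G ->; apply/card_gt0P; exists E0.
  by rewrite inE E0G eqxx.
have He : hg_e G nu = hg_e (hg_image pi G) theta.
  rewrite /hg_e; transitivity (\sum_(E in G | xpredT (pi @: E)) nu E).
    by apply: eq_bigl => E; rewrite andbT.
  rewrite (pull xpredT).
  by apply: eq_bigl => F; rewrite andbT.
rewrite He; apply: le_lt_trans Hlam.
set d := hg_deg G nu.
have d0 : forall L, 0 <= d L by move=> L; apply: sumr_ge0 => E /andP[EG _]; exact: nu0.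
apply: (@le_trans _ _ (\sum_(L in powerset VG | (1 < #|pi @: L|)%N) d L ^+ 2 * p ^- #|pi @: L|)).
  rewrite /hg_Lambda big_mkcondr [X in _ <= X]big_mkcondr /=.
  apply: ler_sum => L _.
  case: (pickP [pred E | (E \in G) && (L \subset E)]) => [E /andP[EG LE]|none].
    rewrite card_in_imset //.
    by move=> x y xL yL; apply: (inj E EG); apply: (subsetP LE).
  have -> : hg_deg G nu L = 0 by rewrite /hg_deg big_pred0.
  rewrite expr0n /= !mul0r if_same; case: ifP => // _.
  by rewrite mulr_ge0 ?sqr_ge0 ?invr_ge0 ?exprn_ge0 // ltW.
rewrite (@partition_big _ _ _ _ _ _ (fun L => (L \in powerset VG) && (1 < #|pi @: L|)%N) (fun L => pi @: L) (fun L' => (L' \in powerset (pi @: VG)) && (1 < #|L'|)%N)) /=; last first.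
  move=> L /andP[LV ->]; rewrite andbT !powersetE in LV *; exact: imsetS.
rewrite /hg_Lambda; apply: ler_sum => L' /andP[L'V L'1].
rewrite (eq_bigr (fun L => d L ^+ 2 * p ^- #|L'|)); last first.
  by move=> L /andP[_ /eqP ->].
rewrite -mulr_suml; apply: ler_wpM2r; first by rewrite invr_ge0 exprn_ge0 // ltW.
rewrite (eq_bigl (fun L => (L \in powerset VG) && (pi @: L == L'))); last first.
  move=> L; case e: (pi @: L == L'); last by rewrite !andbF.
  by rewrite (eqP e) L'1 !andbT.
apply: (le_trans (@sumsq_le _ _ (fun L => (L \in powerset VG) && (pi @: L == L')) d (fun L _ => d0 L))).
have S0 : 0 <= \sum_(L | (L \in powerset VG) && (pi @: L == L')) d L.
  by apply: sumr_ge0 => L _; exact: d0.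
suff Hs : \sum_(L | (L \in powerset VG) && (pi @: L == L')) d L <= hg_deg (hg_image pi G) theta L'.
  by rewrite !expr2 ler_pM.
rewrite /d /hg_deg.
rewrite (exchange_big_dep (fun E => E \in G)) /=; last by move=> L E _ /andP[].
apply: (@le_trans _ _ (\sum_(E in G) (if L' \subset pi @: E then nu E else 0))); last first.
  by rewrite -big_mkcondr (pull (fun F => L' \subset F)).
apply: ler_sum => E EG.
case: (pickP [pred L | ((L \in powerset VG) && (pi @: L == L')) && ((E \in G) && (L \subset E))]) => [L0 PL0|none]; last first.
  by rewrite big_pred0 //; case: ifP => // _; exact: nu0.
move: (PL0) => /andP[/andP[_ /eqP eL0] /andP[_ L0E]].
rewrite (big_pred1 L0); last first.
  move=> L /=; apply/idP/eqP => [/andP[/andP[_ /eqP eL] /andP[_ LE]]|->//].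
  exact: (@sub_inj _ _ pi E L L0 (inj E EG) LE L0E (etrans eL (esym eL0))).
by rewrite -eL0 imsetS.
Qed.
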